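(* Let $(R,\mathfrak m,k)$ be a stretched Artinian local ring with $n=\dim_k\mathfrak m/\mathfrak m^2$ and $r=\dim_k\operatorname{soc}(R)$. Then either $R$ is Gorenstein, or $R\cong S\times_kT$ where $(S,\mathfrak m_S)$ is a stretched Artinian Gorenstein local ring with $\operatorname{edim}(S)=n-r+1$ and $(T,\mathfrak m_T)$ is a local ring with $\mathfrak m_T^2=0$ and $\operatorname{edim}(T)=r-1$. In fact, if $\operatorname{soc}(R)\subseteq\mathfrak m^2$ then $R$ is Gorenstein, and if $x_1\in\operatorname{soc}(R)\setminus\mathfrak m^2$ is part of a minimal generating set $x_1,\dots,x_n$ of $\mathfrak m$, then $R\cong R/(x_1)\times_k R/(x_2,\dots,x_n)$.
   Context: An Artinian local ring is stretched if $\mathfrak m^2$ is a principal ideal. $\operatorname{soc}(R)=(0:_R\mathfrak m)$, $\operatorname{edim}$ denotes embedding dimension. The fibre product of local rings $S,T$ with common residue field $k$ is $S\times_kT=\{(a,b):\pi_S(a)=\pi_T(b)\}$ with $\pi_S,\pi_T$ the residue maps. *)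

(* Defs.v *)
From HB Require Import structures.
From mathcomp Require Import all_boot all_algebra.
Set Implicit Arguments. Unset Strict Implicit. Unset Printing Implicit Defensive.
Import GRing.Theory.
Local Open Scope ring_scope.

Section LocalRingDefs.
Variable R : comUnitRingType.

(* the set of non-units; for a local ring this is the maximal ideal m *)
Definition mx (x : R) : Prop := x \isn't a GRing.unit.

(* R is local: the non-units form an ideal (closure under R-multiples
   and 0 is automatic in a nontrivial commutative ring). *)
Definition is_local : Prop := forall x y : R, mx x -> mx y -> mx (x + y).

Definition is_ideal (I : R -> Prop) : Prop :=
  [/\ I 0, (forall x y, I x -> I y -> I (x + y)) & (forall a x, I x -> I (a * x))].

Definition artinian : Prop :=
  forall I : nat -> R -> Prop, (forall i, is_ideal (I i)) ->
    (forall i x, I i.+1 x -> I i x) ->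
    exists N, forall i, (N <= i)%N -> forall x, I i x <-> I N x.

Definition msq (x : R) : Prop :=
  exists t (a b : 'I_t -> R), (forall i, mx (a i) /\ mx (b i)) /\
    x = \sum_(i < t) a i * b i.

Definition stretched : Prop :=
  exists g : R, forall x, msq x <-> exists c, x = c * g.

Definition soc (x : R) : Prop := forall y, mx y -> x * y = 0.

(* v_1..v_t are linearly independent over k = R/m modulo the ideal J:
   a k-linear relation (coefficients lifted to R) lying in J has all
   coefficients in m *)
Definition indep_mod (J : R -> Prop) t (v : 'I_t -> R) : Prop :=
  forall c : 'I_t -> R, J (\sum_(i < t) c i * v i) -> forall i, mx (c i).

(* the k-vector space (V + J)/J, with V an R-submodule killed by m modulo J,
   has dimension d: maximal size of a k-independent family *)
Definition kdim_eq (V J : R -> Prop) (d : nat) : Prop :=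
  (exists v : 'I_d -> R, (forall i, V (v i)) /\ indep_mod J v) /\
  (forall t (v : 'I_t -> R), (forall i, V (v i)) -> indep_mod J v -> (t <= d)%N).

Definition edim_eq (n : nat) : Prop := kdim_eq mx msq n.

Definition socdim_eq (r : nat) : Prop := kdim_eq soc (fun x => x = 0) r.

Definition gorenstein : Prop := socdim_eq 1.

End LocalRingDefs.

Definition residue_map (S : comUnitRingType) (k : fieldType)
  (pi : {rmorphism S -> k}) : Prop :=
  (forall c : k, exists a, pi a = c) /\ (forall a, pi a = 0 <-> mx a).

(* x |-> (p x, q x) is a ring isomorphism from R onto the fibre product
   S x_k T = {(a,b) | piS a = piT b} *)
Definition fibre_iso (R S T : comUnitRingType) (k : fieldType)
  (p : {rmorphism R -> S}) (q : {rmorphism R -> T})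
  (piS : {rmorphism S -> k}) (piT : {rmorphism T -> k}) : Prop :=
  residue_map piS /\ residue_map piT /\
  (forall x y, p x = p y -> q x = q y -> x = y) /\
  (forall a b, piS a = piT b <-> exists x, p x = a /\ q x = b).

(* Main.v *)
Require Import Defs.
From HB Require Import structures.
From mathcomp Require Import all_boot all_algebra ring_quotient generic_quotient.
From mathcomp Require Import boolp ring zify.
Set Implicit Arguments. Unset Strict Implicit. Unset Printing Implicit Defensive.
Import GRing.Theory.
Local Open Scope ring_scope.


Definition catf (T : Type) m n (a : 'I_m -> T) (b : 'I_n -> T) : 'I_(m + n) -> T :=
  fun i => match split i with inl j => a j | inr k => b k end.

Lemma catf_l (T : Type) m n (a : 'I_m -> T) (b : 'I_n -> T) j :
  catf a b (lshift n j) = a j.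
Proof. by rewrite /catf -[lshift _ _]/(unsplit (inl _ j)) unsplitK. Qed.
Lemma catf_r (T : Type) m n (a : 'I_m -> T) (b : 'I_n -> T) j :
  catf a b (rshift m j) = b j.
Proof. by rewrite /catf -[rshift _ _]/(unsplit (inr _ j)) unsplitK. Qed.

Lemma sum_catf (R : comUnitRingType) m n (c : 'I_(m + n) -> R) (a : 'I_m -> R) (b : 'I_n -> R) :
  \sum_(i < m + n) c i * catf a b i =
  \sum_(i < m) c (lshift n i) * a i + \sum_(i < n) c (rshift m i) * b i.
Proof.
rewrite big_split_ord /=; congr (_ + _); apply: eq_bigr => i _;
by rewrite ?catf_l ?catf_r.
Qed.

Lemma sum_catf2 (R : comUnitRingType) m n (c : 'I_m -> R) (d : 'I_n -> R) (a : 'I_m -> R) (b : 'I_n -> R) :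
  \sum_(i < m + n) catf c d i * catf a b i =
  \sum_(i < m) c i * a i + \sum_(i < n) d i * b i.
Proof. by rewrite sum_catf; congr (_ + _); apply: eq_bigr => i _; rewrite ?catf_l ?catf_r. Qed.

Section Local.
Variable R : comUnitRingType.

Lemma mx0 : mx (0 : R). Proof. by rewrite /mx unitr0. Qed.
Lemma mx1 : ~ mx (1 : R). Proof. by rewrite /mx unitr1. Qed.
Lemma mxM (a x : R) : mx x -> mx (a * x).
Proof. by rewrite /mx unitrM negb_and => ->; rewrite orbT. Qed.
Lemma mxMr (a x : R) : mx x -> mx (x * a).
Proof. by rewrite mulrC; apply: mxM. Qed.
Lemma mxN (x : R) : mx x -> mx (- x).
Proof. by rewrite /mx unitrN. Qed.
Lemma not_mx (x : R) : ~ mx x -> x \is a GRing.unit.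
Proof. by rewrite /mx => /negP; rewrite negbK. Qed.
Lemma unit_not_mx (x : R) : x \is a GRing.unit -> ~ mx x.
Proof. by rewrite /mx => ->. Qed.
Lemma mx_or_unit (x : R) : mx x \/ x \is a GRing.unit.
Proof. by rewrite /mx; case: (x \is a GRing.unit); [right|left]. Qed.

Hypothesis loc : is_local R.

Lemma mxB (x y : R) : mx x -> mx y -> mx (x - y).
Proof. by move=> hx hy; apply: loc => //; apply: mxN. Qed.
Lemma mx_sum m (F : 'I_m -> R) : (forall i, mx (F i)) -> mx (\sum_(i < m) F i).
Proof.
move=> H; apply: (big_ind (@mx R)); [exact: mx0 | move=> x y; exact: loc | by move=> i _].
Qed.
Lemma unitD_mx (u t : R) : u \is a GRing.unit -> mx t -> (u + t) \is a GRing.unit.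
Proof.
move=> Uu mt; apply: not_mx => H.
have : mx (u + t - t) by apply: mxB.
by rewrite addrK; apply: unit_not_mx.
Qed.
Lemma mx_ideal : is_ideal (@mx R).
Proof. split; [exact: mx0 | exact: loc | move=> a x; exact: mxM]. Qed.

Lemma msq0 : msq (0 : R).
Proof.
exists 0%N, (fun _ => 0), (fun _ => 0); split; first by case.
by rewrite big_ord0.
Qed.
Lemma msqMM (a b : R) : mx a -> mx b -> msq (a * b).
Proof.
move=> ha hb; exists 1%N, (fun _ => a), (fun _ => b); split => //.
by rewrite big_ord1.
Qed.
Lemma msqD (x y : R) : msq x -> msq y -> msq (x + y).
Proof.
move=> [t [a [b [hab ->]]]] [t' [a' [b' [hab' ->]]]].
exists (t + t')%N, (catf a a'), (catf b b'); split.
  move=> i; rewrite /catf; case: split => j; [exact: hab | exact: hab'].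
by rewrite sum_catf2.
Qed.
Lemma msqM (c x : R) : msq x -> msq (c * x).
Proof.
move=> [t [a [b [hab ->]]]]; exists t, (fun i => c * a i), b; split.
  by move=> i; split; [apply: mxM; case: (hab i) | case: (hab i)].
by rewrite mulr_sumr; apply: eq_bigr => i _; rewrite mulrA.
Qed.
Lemma msqN (x : R) : msq x -> msq (- x).
Proof. by move=> h; rewrite -mulN1r; apply: msqM. Qed.
Lemma msqB (x y : R) : msq x -> msq y -> msq (x - y).
Proof. by move=> hx hy; apply: msqD => //; apply: msqN. Qed.
Lemma msq_sum m (F : 'I_m -> R) : (forall i, msq (F i)) -> msq (\sum_(i < m) F i).
Proof.
move=> H; apply: (big_ind (@msq R)); [exact: msq0 | move=> x y; exact: msqD | by move=> i _].
Qed.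
Lemma msq_mx (x : R) : msq x -> mx x.
Proof.
move=> [t [a [b [hab ->]]]]; apply: mx_sum => i; apply: mxM; by case: (hab i).
Qed.
End Local.

Record pideal (R : comUnitRingType) := PIdeal {
  pI : R -> Prop; pI_ideal : is_ideal pI; pI_proper : ~ pI 1 }.

Definition pIb (R : comUnitRingType) (J : pideal R) : R -> bool := fun x => `[< pI J x >].

Lemma pIb_closed (R : comUnitRingType) (J : pideal R) : idealr_closed (pIb J).
Proof.
case: J => I [I0 ID IM] I1; split; rewrite /pIb /=.
- by apply/asboolP.
- by apply/asboolP.
- move=> a u v /asboolP Iu /asboolP Iv; apply/asboolP; apply: ID => //; exact: IM.
Qed.

HB.instance Definition _ (R : comUnitRingType) (J : pideal R) :=
  isIdealr.Build R (pIb J) (pIb_closed J).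

Definition Qt (R : comUnitRingType) (J : pideal R) := {ideal_quot (Idealr.clone R (pIb J) _)}.
HB.instance Definition _ (R : comUnitRingType) (J : pideal R) := GRing.ComNzRing.on (Qt J).

Section Q.
Variables (R : comUnitRingType) (J : pideal R).
Local Notation Q := (Qt J).

Definition qunit (x : Q) : bool := `[< exists y, y * x = 1 >].
Definition qinv (x : Q) : Q :=
  match pselect (exists y, y * x = 1) with
  | left H => projT1 (cid H) | right _ => x end.

Lemma qmulVx : {in qunit, left_inverse 1 qinv *%R}.
Proof.
move=> x /asboolP H; rewrite /qinv; case: pselect => // H'.
by case: (cid H').
Qed.
Lemma qunitPl : forall x y : Q, y * x = 1 -> qunit x.
Proof. by move=> x y H; apply/asboolP; exists y. Qed.
Lemma qinv_out : {in [predC qunit], qinv =1 id}.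
Proof.
move=> x; rewrite inE => /asboolPn H; rewrite /qinv; case: pselect => //.
Qed.
HB.instance Definition _ := GRing.ComNzRing_hasMulInverse.Build Q qmulVx qunitPl qinv_out.
End Q.

Definition pq (R : comUnitRingType) (J : pideal R) : {rmorphism R -> Qt J} := (\pi_(Qt J))%qT.

Lemma pq_surj (R : comUnitRingType) (J : pideal R) (s : Qt J) : exists y, pq J y = s.
Proof. by exists (repr s); exact: reprK. Qed.

Lemma pq_repr (R : comUnitRingType) (J : pideal R) (s : Qt J) : pq J (repr s) = s.
Proof. exact: reprK. Qed.

Lemma pq_eq0 (R : comUnitRingType) (J : pideal R) y : pq J y = 0 <-> pI J y.
Proof.
have := @Quotient.idealrBE R (Idealr.clone R (pIb J) _) y 0.
rewrite subr0 /= => E.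
have -> : (0 : Qt J) = pq J 0 by rewrite rmorph0.
split.
- move=> H; have : (y \in pIb J) by rewrite E; apply/eqP; exact H.
  by move/asboolP.
- move=> H; apply/eqP; rewrite -[_ == _]E; exact/asboolP.
Qed.

Lemma pq_eq (R : comUnitRingType) (J : pideal R) y z : pq J y = pq J z <-> pI J (y - z).
Proof.
rewrite -pq_eq0 rmorphB; split; first by move=> ->; rewrite subrr.
by move/eqP; rewrite subr_eq0 => /eqP.
Qed.

Definition mkpideal (R : comUnitRingType) (I : R -> Prop) (Hi : is_ideal I)
  (Hm : forall y, I y -> mx y) : pideal R.
Proof.
refine (@PIdeal R I Hi _). by move/Hm; apply: mx1.
Defined.

Section LocQ.
Variables (R : comUnitRingType) (loc : is_local R) (J : pideal R).
Hypothesis Jm : forall y, pI J y -> mx y.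

Lemma pq_unit y : (pq J y \is a GRing.unit) <-> (y \is a GRing.unit).
Proof.
split; last by move=> U; rewrite rmorph_unit.
move=> /unitrP [s [h1 _]].
have [z zs] := pq_surj s.
move: h1; rewrite -zs -rmorphM -(rmorph1 (pq J)) pq_eq => /Jm H.
have := unitD_mx loc (unitr1 R) H; rewrite addrC subrK unitrM => /andP [_ ->] //.
Qed.
Lemma pq_mx y : mx (pq J y) <-> mx y.
Proof.
rewrite /mx; split => H; apply/negP => U; move/negP: H; apply; by apply/pq_unit.
Qed.
Lemma loc_quot : is_local (Qt J).
Proof.
move=> s t; have [y <-] := pq_surj s; have [z <-] := pq_surj t.
rewrite -rmorphD !pq_mx; exact: loc.
Qed.
Lemma msq_quot (s : Qt J) : msq s <-> exists y, msq y /\ pq J y = s.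
Proof.
split.
- move=> [t [a [b [hab ->]]]].
  exists (\sum_(i < t) repr (a i) * repr (b i)); split.
    apply: msq_sum => i; apply: msqMM; rewrite -pq_mx pq_repr; by case: (hab i).
  rewrite rmorph_sum; apply: eq_bigr => i _; by rewrite rmorphM !pq_repr.
- move=> [y [[t [a [b [hab ->]]]] <-]].
  exists t, (fun i => pq J (a i)), (fun i => pq J (b i)); split.
    move=> i; rewrite !pq_mx; exact: hab.
  by rewrite rmorph_sum; apply: eq_bigr => i _; rewrite rmorphM.
Qed.
End LocQ.

Section Resid.
Variables (R : comUnitRingType) (loc : is_local R).
Definition mpid : pideal R := @mkpideal R (@mx R) (mx_ideal loc) (fun y h => h).
Definition Kt := Qt mpid.
HB.instance Definition _ := GRing.ComUnitRing.on Kt.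
Lemma Kt_field : GRing.field_axiom Kt.
Proof.
move=> s; have [y <-] := pq_surj s => H.
have Jm : forall y, pI mpid y -> mx y by [].
apply/(pq_unit loc Jm); apply: not_mx => my.
by move: H; have /pq_eq0 -> : pI mpid y by []; rewrite eqxx.
Qed.
HB.instance Definition _ := GRing.ComUnitRing_isField.Build Kt Kt_field.
Definition pk : {rmorphism R -> Kt} := pq mpid.
Lemma pk_surj (c : Kt) : exists a, pk a = c. Proof. exact: pq_surj. Qed.
Lemma pk_eq0 a : pk a = 0 <-> mx a. Proof. exact: pq_eq0. Qed.
End Resid.


Section QLift.
Variables (R : comUnitRingType) (loc : is_local R) (J : pideal R).
Hypothesis Jm : forall y, pI J y -> mx y.

Definition qlf (s : Qt J) : Kt loc := pk loc (repr s).
Lemma qlf_pq y : qlf (pq J y) = pk loc y.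
Proof.
rewrite /qlf; apply/(pq_eq (mpid loc)); apply: Jm; apply/pq_eq; exact: pq_repr.
Qed.
Lemma qlf_zmod : zmod_morphism qlf.
Proof.
move=> s t; have [y <-] := pq_surj s; have [z <-] := pq_surj t.
by rewrite -rmorphB !qlf_pq rmorphB.
Qed.
Lemma qlf_monoid : monoid_morphism qlf.
Proof.
split; first by rewrite -(rmorph1 (pq J)) qlf_pq rmorph1.
move=> s t; have [y <-] := pq_surj s; have [z <-] := pq_surj t.
by rewrite -rmorphM !qlf_pq rmorphM.
Qed.
HB.instance Definition _ := GRing.isZmodMorphism.Build (Qt J) (Kt loc) qlf qlf_zmod.
HB.instance Definition _ := GRing.isMonoidMorphism.Build (Qt J) (Kt loc) qlf qlf_monoid.
Definition qlift : {rmorphism Qt J -> Kt loc} := qlf.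

Lemma qlift_pq y : qlift (pq J y) = pk loc y. Proof. exact: qlf_pq. Qed.

Lemma qlift_resid : residue_map qlift.
Proof.
split.
- move=> c; have [a <-] := pk_surj c; exists (pq J a); exact: qlift_pq.
- move=> s; have [y <-] := pq_surj s; rewrite qlift_pq pk_eq0.
  by rewrite (pq_mx loc Jm).
Qed.
End QLift.

Section Fibre.
Variables (R : comUnitRingType) (loc : is_local R) (Z W : pideal R).
Hypothesis Zm : forall y, pI Z y -> mx y.
Hypothesis Wm : forall y, pI W y -> mx y.
Hypothesis ZW0 : forall y, pI Z y -> pI W y -> y = 0.
Hypothesis ZWm : forall y, mx y -> exists a b, [/\ pI Z a, pI W b & y = a + b].

Lemma fibre_gen : fibre_iso (pq Z) (pq W) (qlift loc Zm) (qlift loc Wm).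
Proof.
split; first exact: qlift_resid.
split; first exact: qlift_resid.
split.
  move=> x y /pq_eq hZ /pq_eq hW; apply/eqP; rewrite -subr_eq0; apply/eqP; exact: ZW0.
move=> a b; split.
- have [y <-] := pq_surj a; have [z <-] := pq_surj b.
  rewrite !qlift_pq => /(pq_eq (mpid loc)) /ZWm [a' [b' [Za Wb E]]].
  exists (y - a'); split.
    apply/pq_eq; have -> : y - a' - y = (-1) * a' by ring.
    by case: (pI_ideal Z) => _ _; apply.
  apply/pq_eq; have -> : y - a' - z = (y - z) - a' by ring.
  by rewrite E; have -> : a' + b' - a' = b' by ring.
- move=> [x [<- <-]]; by rewrite !qlift_pq.
Qed.
End Fibre.


Lemma unit_mul0 (R : comUnitRingType) (u x : R) : u \is a GRing.unit -> u * x = 0 -> x = 0.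
Proof. by move=> U E; rewrite -[x]mul1r -(mulVr U) -mulrA E mulr0. Qed.

Lemma sum_two (R : comUnitRingType) t (i0 i1 : 'I_t) (a b : R) (v : 'I_t -> R) :
  i0 != i1 ->
  \sum_(i < t) (if i == i0 then a else if i == i1 then b else 0) * v i = a * v i0 + b * v i1.
Proof.
move=> ne; rewrite (bigD1 i0) //= eqxx (bigD1 i1) /=; last by rewrite eq_sym.
rewrite eq_sym (negPf ne) eqxx big1 ?addr0 // => i /andP [h1 h2].
by rewrite (negPf h1) (negPf h2) mul0r.
Qed.

Lemma gorenstein_of (R : comUnitRingType) (h : R) :
  h != 0 -> soc h -> (forall s, soc s -> exists c, s = c * h) -> gorenstein R.
Proof.
move=> h0 sh H; split.
  exists (fun _ => h); split => // c; rewrite big_ord1 => E i; rewrite (ord1 i).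
  case: (mx_or_unit (c ord0)) => // U; exfalso; move/eqP: h0; apply.
  by rewrite -[h]mul1r -(mulVr U) -mulrA E mulr0.
move=> t v sv ind; rewrite leqNgt; apply/negP => t2.
have t0 : (0 < t)%N by apply: leq_trans t2.
pose i0 := Ordinal t0; pose i1 := Ordinal t2.
have ne : i0 != i1 by [].
have [a ea] := H _ (sv i0); have [b eb] := H _ (sv i1).
case: (mx_or_unit a) => [ma | ua].
- have E1 : \sum_(i < t) (if i == i0 then 1 else 0) * v i = 0.
    rewrite (bigD1 i0) //= ?eqxx big1 ?addr0; last by move=> i /negPf ->; rewrite mul0r.
    by rewrite mul1r ea mulrC sh.
  by have := ind _ E1 i0; rewrite /= ?eqxx; apply: mx1.
- have E1 : \sum_(i < t) (if i == i0 then b else if i == i1 then - a else 0) * v i = 0.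
    by rewrite sum_two // ea eb; ring.
  have := ind _ E1 i1; rewrite /= ?eqxx => /mxN; rewrite opprK; exact: unit_not_mx.
Qed.

Section Str.
Variables (R : comUnitRingType) (loc : is_local R) (art : artinian R) (g : R).
Hypothesis Hg : forall x, msq x <-> exists c, x = c * g.

Lemma g_split : g = 0 \/ exists y z, [/\ mx y, mx z & g = y * z].
Proof.
have [t [a [b [hab E]]]] : msq g by apply/Hg; exists 1; rewrite mul1r.
case: (pselect (exists i d, d \is a GRing.unit /\ a i * b i = d * g)).
  move=> [i [d [Ud Ed]]]; right; exists (a i), (d^-1 * b i).
  case: (hab i) => ha hb; split => //; first exact: mxM.
  by rewrite mulrCA Ed mulrA mulVr ?mul1r.
move=> NU; left.
have : exists d, mx d /\ g = d * g.
  rewrite {1}E; apply: (big_ind (fun x => exists d, mx d /\ x = d * g)).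
  - by exists 0; rewrite mul0r; split => //; exact: mx0.
  - move=> x y [d [md ->]] [d' [md' ->]]; exists (d + d'); split; first exact: loc.
    by rewrite mulrDl.
  - move=> i _; case: (hab i) => ha hb.
    have [d Ed] := (Hg (a i * b i)).1 (msqMM ha hb).
    exists d; split => //; case: (mx_or_unit d) => // Ud; exfalso; apply: NU.
    by exists i, d.
move=> [d [md Ed]].
have U : (1 - d) \is a GRing.unit by apply: unitD_mx => //; [exact: unitr1 | exact: mxN].
have : (1 - d) * g = 0 by rewrite mulrBl mul1r -Ed subrr.
move=> /(congr1 (fun x => (1 - d)^-1 * x)); by rewrite mulrA mulVr // mul1r mulr0.
Qed.

Section YZ.
Variables (y z : R).
Hypotheses (my : mx y) (mz : mx z) (gyz : g = y * z).

Lemma stepj x j : mx x -> exists e, x * (y ^+ j * g) = e * (y ^+ j.+1 * g).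
Proof.
move=> mxx; have [w Ew] := (Hg (x * z)).1 (msqMM mxx mz).
exists w; rewrite exprS.
have -> : x * (y ^+ j * g) = y ^+ j * y * (x * z) by rewrite gyz; ring.
rewrite Ew; ring.
Qed.

Lemma nilp : exists N, y ^+ N * g = 0.
Proof.
pose I i := fun x : R => exists c, x = c * (y ^+ i * g).
have Iid : forall i, is_ideal (I i).
  move=> i; split.
  - by exists 0; rewrite mul0r.
  - move=> a b [c ->] [d ->]; exists (c + d); by rewrite mulrDl.
  - move=> a x [c ->]; exists (a * c); by rewrite mulrA.
have Idec : forall i x, I i.+1 x -> I i x.
  move=> i x [c ->]; exists (c * y); rewrite exprS; ring.
have [N HN] := art Iid Idec.
have : I N.+1 (y ^+ N * g) by apply/(HN N.+1) => //; exists 1; rewrite mul1r.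
move=> [c Ec]; exists N.
have U : (1 - c * y) \is a GRing.unit.
  by apply: unitD_mx => //; [exact: unitr1 | apply: mxN; apply: mxM].
have : (1 - c * y) * (y ^+ N * g) = 0.
  have -> : (1 - c * y) * (y ^+ N * g) = y ^+ N * g - c * (y ^+ N.+1 * g) by rewrite exprS; ring.
  by rewrite -Ec subrr.
move=> /(congr1 (fun x => (1 - c * y)^-1 * x)); by rewrite mulrA mulVr // mul1r mulr0.
Qed.
End YZ.

Lemma hex0 : g = 0 -> exists h, [/\ h != 0, soc h & forall s : R, soc s -> msq s -> exists c, s = c * h].
Proof.
move=> g0.
have msq0 : forall s : R, msq s -> s = 0 by move=> s /Hg [c ->]; rewrite g0 mulr0.
case: (pselect (exists x0 : R, mx x0 /\ x0 != 0)).
  move=> [x0 [m0 n0]]; exists x0; split => //.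
    by move=> w mw; apply: msq0; apply: msqMM.
  by move=> s _ /msq0 ->; exists 0; rewrite mul0r.
move=> N; exists 1; split; first exact: oner_neq0.
  move=> w mw; rewrite mul1r; case: (eqVneq w 0) => // nw; exfalso; apply: N; by exists w.
by move=> s _ /msq0 ->; exists 0; rewrite mul0r.
Qed.

Lemma hex : exists h, [/\ h != 0, soc h & forall s : R, soc s -> msq s -> exists c, s = c * h].
Proof.
case: g_split => [g0 | [y [z [my mz gyz]]]]; first exact: hex0.
case: (eqVneq g 0) => [g0 | gn0]; first exact: hex0.
have ex : exists N, y ^+ N * g == 0 by have [N HN] := nilp my; exists N; rewrite HN.
case: (ex_minnP ex) => N0 /eqP PN0 minN.
have N0pos : (0 < N0)%N.
  rewrite lt0n; apply/negP => /eqP e; move: PN0; rewrite e expr0 mul1r => g0.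
  by move/eqP: gn0.
set h := y ^+ N0.-1 * g.
have hN0 : h != 0.
  apply/negP => /eqP H0; have := minN N0.-1; rewrite /h in H0; rewrite H0 eqxx => /(_ isT).
  by rewrite -ltnS prednK // ltnn.
have Pj : forall j, (N0.-1 <= j)%N -> y ^+ j * g = y ^+ (j - N0.-1) * h.
  by move=> j hj; rewrite /h mulrA -exprD subnK.
have sh : soc h.
  move=> x mxx; have [e Ee] := stepj mz gyz N0.-1 mxx.
  by rewrite mulrC Ee prednK // PN0 mulr0.
exists h; split => // s ss ms.
have [a Ea] := (Hg s).1 ms.
suff Q : forall k j a, (N0.-1 - j <= k)%N -> soc (a * (y ^+ j * g)) ->
  exists c, a * (y ^+ j * g) = c * h.
  by have := Q N0.-1 0%N a (leq_subr _ _); rewrite expr0 mul1r -Ea; apply.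
elim=> [|k IH] j b hk sb.
  rewrite (Pj j); last by lia.
  by exists (b * y ^+ (j - N0.-1)); rewrite mulrA.
case: (leqP (N0.-1 - j) k) => hk'; first exact: IH.
case: (mx_or_unit b) => [mb | ub].
  have [e Ee] := stepj mz gyz j mb.
  rewrite Ee in sb *; apply: IH => //; lia.
exfalso.
have E : b * (y ^+ j.+1 * g) = 0 by rewrite -(sb y my) exprS; ring.
have E2 : y ^+ j.+1 * g = 0.
  exact: (unit_mul0 ub E).
have := minN j.+1; rewrite E2 eqxx => /(_ isT) hj.
lia.
Qed.

Lemma part2 : (forall x : R, soc x -> msq x) -> gorenstein R.
Proof.
move=> H; have [h [hn sh Hs]] := hex.
by apply: (gorenstein_of hn sh) => s ss; apply: Hs => //; apply: H.
Qed.
End Str.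


Lemma soc_ideal (R : comUnitRingType) : is_ideal (@soc R).
Proof.
split.
- by move=> y _; rewrite mul0r.
- by move=> x y hx hy w mw; rewrite mulrDl hx ?hy ?addr0.
- by move=> a x hx w mw; rewrite -mulrA hx ?mulr0.
Qed.

Lemma artinian_quot (R : comUnitRingType) (J : pideal R) : artinian R -> artinian (Qt J).
Proof.
move=> art I Iid Idec.
pose I' i := fun y : R => I i (pq J y).
have I'id : forall i, is_ideal (I' i).
  move=> i; case: (Iid i) => h0 hD hM; split; rewrite /I'.
  - by rewrite rmorph0.
  - by move=> x y hx hy; rewrite rmorphD; apply: hD.
  - by move=> a x hx; rewrite rmorphM; apply: hM.
have [N HN] := @art I' I'id (fun i x h => Idec i _ h).
exists N => i hi s; have [y <-] := pq_surj s; exact: (HN i hi y).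
Qed.

Section LQ.
Variables (R : comUnitRingType) (loc : is_local R) (J : pideal R).
Hypothesis Jm : forall y, pI J y -> mx y.

Lemma stretched_quot : stretched R -> stretched (Qt J).
Proof.
move=> [g Hg]; exists (pq J g) => s; rewrite (msq_quot loc Jm); split.
- move=> [y [/Hg [c ->] <-]]; exists (pq J c); by rewrite rmorphM.
- move=> [c ->]; have [c' <-] := pq_surj c; exists (c' * g); split.
    by apply/Hg; exists c'.
  by rewrite rmorphM.
Qed.

Lemma gor_quot (h : R) :
  (forall y, pI J y -> msq y -> y = 0) -> mx h -> soc h -> ~ pI J h ->
  (forall s, soc s -> exists a c, pI J a /\ s = a + c * h) ->
  gorenstein (Qt J).
Proof.
move=> J0 mh sh nJh Hs.
have mpqh : mx (pq J h) by apply/(pq_mx loc Jm).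
apply: (@gorenstein_of _ (pq J h)).
- by apply/eqP => /pq_eq0.
- move=> t mt; have [w ew] := pq_surj t; rewrite -ew in mt *.
  move/(pq_mx loc Jm): mt => mw; by rewrite -rmorphM sh // rmorph0.
- move=> s ss; have [y ey] := pq_surj s; rewrite -ey in ss *.
  case: (mx_or_unit y) => [my | uy].
    have sy : soc y.
      move=> w mw; apply: J0; last exact: msqMM.
      apply/pq_eq0; rewrite rmorphM; apply: ss; exact/(pq_mx loc Jm).
    have [a [c [Ja ->]]] := Hs y sy.
    exists (pq J c); rewrite rmorphD rmorphM.
    by have /pq_eq0 -> := Ja; rewrite add0r.
  exfalso; have := ss _ mpqh => E.
  have U : pq J y \is a GRing.unit by rewrite rmorph_unit.
  have := unit_mul0 U E => /pq_eq0; exact: nJh.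
Qed.
End LQ.


Section Dep.
Variable R : comUnitRingType.
Hypothesis loc : is_local R.

Lemma idN (J : R -> Prop) x : is_ideal J -> J x -> J (- x).
Proof. by case=> _ _ hM hx; rewrite -mulN1r; apply: hM. Qed.
Lemma idD (J : R -> Prop) x y : is_ideal J -> J x -> J y -> J (x + y).
Proof. by case=> _ hD _; apply: hD. Qed.
Lemma idM (J : R -> Prop) a x : is_ideal J -> J x -> J (a * x).
Proof. by case=> _ _ hM; apply: hM. Qed.
Lemma idB (J : R -> Prop) x y : is_ideal J -> J x -> J y -> J (x - y).
Proof. by move=> hJ hx hy; apply: idD => //; apply: idN. Qed.
Lemma id0 (J : R -> Prop) : is_ideal J -> J 0.
Proof. by case. Qed.
Lemma id_sum (J : R -> Prop) t (F : 'I_t -> R) : is_ideal J -> (forall i, J (F i)) -> J (\sum_(i < t) F i).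
Proof.
move=> hJ H; apply: (big_ind J); [exact: id0 | move=> x y; exact: idD | by move=> i _].
Qed.

Lemma zero_ideal : is_ideal (fun x : R => x = 0).
Proof. by split => // [x y -> ->|a x ->]; rewrite ?addr0 ?mulr0. Qed.
Lemma msq_ideal : is_ideal (@msq R).
Proof. split; [exact: msq0 | exact: msqD | move=> a x; exact: msqM]. Qed.

Lemma not_indep (J : R -> Prop) t (f : 'I_t -> R) :
  ~ indep_mod J f -> exists c, J (\sum_(i < t) c i * f i) /\ exists i, ~ mx (c i).
Proof.
move=> H; apply: contrapT => H2; apply: H => c Jc i; apply: contrapT => nm.
by apply: H2; exists c; split => //; exists i.
Qed.

Lemma kdim_not_indep (V J : R -> Prop) d t (f : 'I_t -> R) :
  kdim_eq V J d -> (forall i, V (f i)) -> (d < t)%N -> ~ indep_mod J f.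
Proof. by move=> [_ B] Vf lt ind; have := B _ _ Vf ind; rewrite leqNgt lt. Qed.

Lemma dep_ext (J : R -> Prop) t (f : 'I_t -> R) x :
  is_ideal J -> indep_mod J f -> (forall e, mx e -> J (e * x)) ->
  ~ indep_mod J (catf f (fun _ : 'I_1 => x)) ->
  exists a : 'I_t -> R, J (x - \sum_(i < t) a i * f i).
Proof.
move=> hJ ind Jx /not_indep [c [Jc [i0 nm]]].
rewrite sum_catf big_ord1 in Jc.
set e := c (rshift t ord0) in Jc.
case: (mx_or_unit e) => [me | ue].
  exfalso.
  have H : J (\sum_(i < t) c (lshift 1 i) * f i).
    have -> : \sum_(i < t) c (lshift 1 i) * f i =
      (\sum_(i < t) c (lshift 1 i) * f i + e * x) - e * x by rewrite addrK.
    by apply: idB => //; apply: Jx.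
  have := ind _ H; case: (split_ordP i0) => k ek hk; rewrite ek in nm.
    by apply: nm; apply: hk.
  by apply: nm; rewrite (ord1 k).
exists (fun i => - e^-1 * c (lshift 1 i)).
have -> : x - \sum_(i < t) - e^-1 * c (lshift 1 i) * f i =
  e^-1 * (\sum_(i < t) c (lshift 1 i) * f i + e * x).
  have -> : \sum_(i < t) - e^-1 * c (lshift 1 i) * f i = - (e^-1 * \sum_(i < t) c (lshift 1 i) * f i).
    by rewrite mulr_sumr -sumrN; apply: eq_bigr => i _; rewrite !mulNr mulrA.
  by rewrite opprK mulrDr mulrA mulVr // mul1r addrC.
by apply: idM.
Qed.

Lemma sum_subl t (a b w : 'I_t -> R) :
  \sum_(i < t) (a i - b i) * w i = \sum_(i < t) a i * w i - \sum_(i < t) b i * w i.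
Proof. by rewrite -sumrB; apply: eq_bigr => i _; rewrite mulrBl. Qed.

Variables (n : nat) (v : 'I_n -> R).
Hypotheses (ed : edim_eq R n) (vm : forall i, mx (v i)) (vind : indep_mod (@msq R) v).

Lemma span_v y : mx y -> exists c : 'I_n -> R, msq (y - \sum_(i < n) c i * v i).
Proof.
move=> my; apply: dep_ext => //; [exact: msq_ideal | by move=> e me; apply: msqMM |].
apply: (kdim_not_indep ed); last by rewrite addn1.
by move=> i; rewrite /catf; case: split.
Qed.

Lemma span_v' y : exists c : 'I_n -> R, mx y -> msq (y - \sum_(i < n) c i * v i).
Proof.
case: (pselect (mx y)) => my; first by have [c hc] := span_v my; exists c.
by exists (fun _ => 0).
Qed.

Definition cf (y : R) : 'I_n -> R := projT1 (cid (span_v' y)).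
Lemma cfP y : mx y -> msq (y - \sum_(i < n) cf y i * v i).
Proof. exact: (projT2 (cid (span_v' y))). Qed.

Local Notation k := (Kt loc).
Local Notation pi := (pk loc).

Definition coord (y : R) : 'rV[k]_n := \row_i pi (cf y i).

Lemma coord_eq y d : mx y -> msq (y - \sum_(i < n) d i * v i) -> coord y = \row_i pi (d i).
Proof.
move=> my hd; apply/rowP => i; rewrite !mxE; apply/(pq_eq (mpid loc)) => /=.
suff H : msq (\sum_(i < n) (cf y i - d i) * v i) by exact: (@vind (fun i => cf y i - d i) H i).
rewrite sum_subl.
have -> : \sum_(i < n) cf y i * v i - \sum_(i < n) d i * v i =
  (y - \sum_(i < n) d i * v i) - (y - \sum_(i < n) cf y i * v i) by ring.
by apply: msqB => //; apply: cfP.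
Qed.

Lemma rowpk_eq0 t (c : 'I_t -> R) : (\row_i pi (c i)) = 0 -> forall i, mx (c i).
Proof. by move=> /rowP H i; have := H i; rewrite !mxE => /pk_eq0. Qed.

Lemma row_repr t (u : 'rV[k]_t) : \row_i pi (repr (u 0 i)) = u.
Proof. by apply/rowP => i; rewrite !mxE; apply: pq_repr. Qed.

Definition Lrow (a : 'rV[k]_n) : R := \sum_(i < n) repr (a 0 i) * v i.
Lemma Lrow_mx a : mx (Lrow a).
Proof. by apply: mx_sum => // i; apply: mxM. Qed.
Lemma coord_L a : coord (Lrow a) = a.
Proof.
rewrite (@coord_eq _ (fun i => repr (a 0 i))) ?row_repr //; first exact: Lrow_mx.
by rewrite /Lrow subrr; apply: msq0.
Qed.

Definition cmat t (w : 'I_t -> R) : 'M[k]_(t, n) := \matrix_(i, j) coord (w i) 0 j.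

Lemma coord_comb t (w : 'I_t -> R) (c : 'I_t -> R) : (forall i, mx (w i)) ->
  coord (\sum_(i < t) c i * w i) = (\row_i pi (c i)) *m cmat w.
Proof.
move=> wm.
have mS : mx (\sum_(i < t) c i * w i) by apply: mx_sum => // i; apply: mxM.
rewrite (@coord_eq _ (fun j => \sum_(i < t) c i * cf (w i) j)) //.
  apply/rowP => j; rewrite !mxE rmorph_sum; apply: eq_bigr => i _.
  by rewrite !mxE rmorphM.
have -> : \sum_(j < n) (\sum_(i < t) c i * cf (w i) j) * v j =
  \sum_(i < t) c i * \sum_(j < n) cf (w i) j * v j.
  under eq_bigr => j _ do rewrite mulr_suml.
  rewrite exchange_big /=; apply: eq_bigr => i _; rewrite mulr_sumr; apply: eq_bigr => j _.
  by rewrite mulrA.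
rewrite -sumrB; apply: msq_sum => i; rewrite -mulrBr; apply: msqM; exact: cfP.
Qed.

Lemma coord_msq y : msq y -> coord y = 0.
Proof.
move=> hy; rewrite (@coord_eq _ (fun _ => 0)); first by apply/rowP => i; rewrite !mxE rmorph0.
  exact: msq_mx.
by rewrite big1 ?subr0 // => i _; rewrite mul0r.
Qed.

Lemma coord0 y : mx y -> coord y = 0 -> msq y.
Proof.
move=> my h; have := cfP my; have hc := rowpk_eq0 h.
have : msq (\sum_(i < n) cf y i * v i) by apply: msq_sum => i; apply: msqMM.
by move=> h1 h2; have := msqD h2 h1; rewrite subrK.
Qed.

Lemma free_indep t (w : 'I_t -> R) : (forall i, mx (w i)) -> row_free (cmat w) -> indep_mod (@msq R) w.
Proof.
move=> wm fr c hc; apply: rowpk_eq0; apply: (row_free_inj fr).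
by rewrite mul0mx -coord_comb //; apply: coord_msq.
Qed.

Lemma indep_free t (w : 'I_t -> R) : (forall i, mx (w i)) -> indep_mod (@msq R) w -> row_free (cmat w).
Proof.
move=> wm ind; apply: inj_row_free => u hu.
have := @coord_comb t w (fun i => repr (u 0 i)) wm; rewrite row_repr hu => h0.
have mS : mx (\sum_(i < t) repr (u 0 i) * w i) by apply: mx_sum => // i; apply: mxM.
have H := coord0 mS h0.
apply/rowP => j; rewrite mxE -(pq_repr (u 0 j)); apply/pk_eq0.
exact: (@ind (fun i => repr (u 0 i)) H j).
Qed.

Lemma coordD x y : mx x -> mx y -> coord (x + y) = coord x + coord y.
Proof.
move=> mx' my; rewrite (@coord_eq _ (fun i => cf x i + cf y i)); first last.
- have -> : x + y - \sum_(i < n) (cf x i + cf y i) * v i =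
    (x - \sum_(i < n) cf x i * v i) + (y - \sum_(i < n) cf y i * v i).
    rewrite (eq_bigr (fun i => cf x i * v i + cf y i * v i)); last by move=> i _; rewrite mulrDl.
    rewrite big_split /=; ring.
  by apply: msqD; apply: cfP.
- exact: loc.
by apply/rowP => i; rewrite !mxE rmorphD.
Qed.
Lemma coordN x : mx x -> coord (- x) = - coord x.
Proof.
move=> mx'; rewrite (@coord_eq _ (fun i => - cf x i)); first last.
- have -> : - x - \sum_(i < n) - cf x i * v i = - (x - \sum_(i < n) cf x i * v i).
    rewrite (eq_bigr (fun i => - (cf x i * v i))); last by move=> i _; rewrite mulNr.
    rewrite sumrN; ring.
  by apply: msqN; apply: cfP.
- exact: mxN.
by apply/rowP => i; rewrite !mxE rmorphN.
Qed.
Lemma coordB x y : mx x -> mx y -> coord (x - y) = coord x - coord y.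
Proof. by move=> mx' my; rewrite coordD ?coordN //; apply: mxN. Qed.

Lemma cap_compl a (A : 'M[k]_(a, n)) (p : 'rV_a) (q : 'rV_(\rank (A^C)%MS)) :
  row_free A -> p *m A = q *m row_base (A^C)%MS -> p = 0 /\ q = 0.
Proof.
move=> fA E.
have H : (p *m A <= A :&: A^C)%MS.
  rewrite sub_capmx submxMl /= E.
  apply: submx_trans (submxMl _ _) _; by rewrite eq_row_base.
rewrite capmx_compl submx0 mulmx_free_eq0 // in H.
move/eqP: H => p0; split => //.
move: E; rewrite p0 mul0mx => /esym/eqP; rewrite mulmx_free_eq0 ?row_base_free //.
by move/eqP.
Qed.

Lemma principal_ideal (a : R) : is_ideal (fun y => exists c, y = c * a).
Proof.
split; first by exists 0; rewrite mul0r.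
  by move=> y z [c ->] [d ->]; exists (c + d); rewrite mulrDl.
by move=> b y [c ->]; exists (b * c); rewrite mulrA.
Qed.

Lemma span_ideal t (P : pred 'I_t) (x : 'I_t -> R) :
  is_ideal (fun y => exists c : 'I_t -> R, y = \sum_(j < t | P j) c j * x j).
Proof.
split; first by exists (fun _ => 0); rewrite big1 // => j _; rewrite mul0r.
  move=> y z [c ->] [d ->]; exists (fun j => c j + d j); rewrite -big_split /=.
  by apply: eq_bigr => j _; rewrite mulrDl.
move=> b y [c ->]; exists (fun j => b * c j); rewrite mulr_sumr.
by apply: eq_bigr => j _; rewrite mulrA.
Qed.

Lemma part3 (x : 'I_n -> R) (i0 : 'I_n) :
  (forall i, mx (x i)) ->
  (forall y : R, mx y -> exists c : 'I_n -> R, y = \sum_(i < n) c i * x i) ->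
  soc (x i0) ->
  exists (S T : comUnitRingType) (k : fieldType)
         (p : {rmorphism R -> S}) (q : {rmorphism R -> T})
         (piS : {rmorphism S -> k}) (piT : {rmorphism T -> k}),
    fibre_iso p q piS piT /\
    (forall s : S, exists y, p y = s) /\
    (forall y, p y = 0 <-> exists c, y = c * x i0) /\
    (forall t : T, exists y, q y = t) /\
    (forall y, q y = 0 <->
       exists c : 'I_n -> R, y = \sum_(j < n | j != i0) c j * x j).
Proof.
move=> xm xgen xs.
have fr : row_free (cmat x).
  rewrite row_free_unit -row_full_unit -sub1mx; apply/row_subP => j; rewrite row1.
  have [c hc] := xgen (Lrow (delta_mx 0 j)) (Lrow_mx _).
  apply/submxP; exists (\row_i pk loc (c i)).
  by rewrite -coord_comb // -hc coord_L.
have xind := free_indep xm fr.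
pose Z := fun y : R => exists c, y = c * x i0.
pose W := fun y : R => exists c : 'I_n -> R, y = \sum_(j < n | j != i0) c j * x j.
have Zm : forall y, Z y -> mx y by move=> y [c ->]; apply: mxM.
have Wm : forall y, W y -> mx y.
  move=> y [c ->]; apply: (big_ind (@mx R)); [exact: mx0 | move=> a b; exact: loc |].
  by move=> j _; apply: mxM.
pose Zp := mkpideal (principal_ideal (x i0)) Zm.
pose Wp := mkpideal (span_ideal (fun j => j != i0) x) Wm.
have ZW0 : forall y, pI Zp y -> pI Wp y -> y = 0.
  move=> y [c ->] [d E].
  pose e := fun j => if j == i0 then c else - d j.
  have H : msq (\sum_(j < n) e j * x j).
    have -> : \sum_(j < n) e j * x j = 0.
      rewrite (bigD1 i0) //= /e eqxx E.
      rewrite [X in _ + X](eq_bigr (fun j => - (d j * x j))); last first.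
        by move=> j /negPf ->; rewrite mulNr.
      by rewrite sumrN subrr.
    exact: msq0.
  have := @xind e H i0; rewrite /e eqxx => mc.
  by rewrite mulrC; apply: xs.
have ZWm : forall y, mx y -> exists a b, [/\ pI Zp a, pI Wp b & y = a + b].
  move=> y /xgen [c ->]; exists (c i0 * x i0), (\sum_(j < n | j != i0) c j * x j).
  split; [by exists (c i0) | by exists c | by rewrite (bigD1 i0)].
exists (Qt Zp), (Qt Wp), (Kt loc), (pq Zp), (pq Wp), (@qlift R loc Zp Zm), (@qlift R loc Wp Wm).
split; first exact: (@fibre_gen R loc Zp Wp Zm Wm ZW0 ZWm).
split; first exact: pq_surj.
split; first by move=> y; rewrite pq_eq0.
split; first exact: pq_surj.
by move=> y; rewrite pq_eq0.
Qed.

Section Part1.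
Variables (art : artinian R) (g : R).
Hypothesis Hg : forall x, msq x <-> exists c, x = c * g.
Variable r' : nat.
Hypothesis sd : socdim_eq R r'.+1.
Hypothesis ng : ~ gorenstein R.

Lemma part1_core :
   exists (S T : comUnitRingType) (k : fieldType)
          (p : {rmorphism R -> S}) (q : {rmorphism R -> T})
          (piS : {rmorphism S -> k}) (piT : {rmorphism T -> k}),
     fibre_iso p q piS piT /\
     [/\ artinian S, is_local S, stretched S, gorenstein S & edim_eq S (n + 1 - r'.+1)] /\
     (n + 1 = (n + 1 - r'.+1) + r'.+1)%N /\
     [/\ is_local T, (forall y : T, msq y -> y = 0) & edim_eq T (r'.+1 - 1)] /\
     (r'.+1 = (r'.+1 - 1).+1)%N.
Proof.
have [h0 [h0n sh0 socmsq]] := hex loc art Hg.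
have mh0 : mx h0.
  case: (mx_or_unit h0) => // U; exfalso; apply: ng.
  apply: (gorenstein_of h0n sh0) => s ss; exists (s * h0^-1).
  by rewrite -mulrA mulVr ?mulr1.
have [[w [ws wind]] sdB] := sd.
have wm : forall i, mx (w i).
  move=> i; case: (mx_or_unit (w i)) => // U; exfalso; move/eqP: h0n; apply.
  by apply: (unit_mul0 U); apply: ws.
have [a Ea] : exists a : 'I_r'.+1 -> R, h0 - \sum_(i < r'.+1) a i * w i = 0.
  apply: (@dep_ext (fun x => x = 0) _ w h0) => //; [exact: zero_ideal | by move=> e me; rewrite mulrC sh0 |].
  apply: (kdim_not_indep sd); last by rewrite addn1.
  by move=> i; rewrite /catf; case: split.
have [i1 ua] : exists i1, a i1 \is a GRing.unit.
  apply: contrapT => N; apply: (negP h0n); apply/eqP.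
  have -> : h0 = \sum_(i < r'.+1) a i * w i by apply/eqP; rewrite -subr_eq0 Ea.
  apply: big1 => i _; case: (mx_or_unit (a i)) => [ma | U]; last by exfalso; apply: N; exists i.
  by rewrite mulrC ws.
pose z := fun j : 'I_r' => w (lift i1 j).
have zs : forall j, soc (z j) by move=> j; apply: ws.
have zm : forall j, mx (z j) by move=> j; apply: wm.
pose zh := catf z (fun _ : 'I_1 => h0).
have zhs : forall i, soc (zh i) by move=> i; rewrite /zh /catf; case: split.
have Eh0 : h0 = a i1 * w i1 + \sum_(j < r') a (lift i1 j) * z j.
  have : h0 = \sum_(i < r'.+1) a i * w i by apply/eqP; rewrite -subr_eq0 Ea.
  by rewrite (bigD1_ord i1) //=.
have zind0 : indep_mod (fun x => x = 0) zh.
  move=> c Hc.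
  rewrite /zh sum_catf big_ord1 in Hc.
  set e := c (rshift r' ord0) in Hc.
  pose c' := fun i => if unlift i1 i is Some j then c (lshift 1 j) + e * a i else e * a i.
  have E' : \sum_(i < r'.+1) c' i * w i = 0.
    rewrite (bigD1_ord i1) //= /c' unlift_none.
    under eq_bigr => j _ do rewrite liftK.
    move: Hc Eh0; rewrite /z => Hc Eh0.
    have -> : \sum_(j < r') (c (lshift 1 j) + e * a (lift i1 j)) * w (lift i1 j) =
      \sum_(j < r') c (lshift 1 j) * w (lift i1 j) + e * \sum_(j < r') a (lift i1 j) * w (lift i1 j).
      by rewrite mulr_sumr -big_split; apply: eq_bigr => j _ /=; ring.
    rewrite -[RHS]Hc Eh0; ring.
  have H := @wind c' E'.
  have me : mx e.
    have := H i1; rewrite /c' unlift_none; case: (mx_or_unit e) => // ue.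
    by move=> m; exfalso; apply: (unit_not_mx _ m); rewrite unitrM ue ua.
  have mcl : forall j, mx (c (lshift 1 j)).
    move=> j; have := H (lift i1 j); rewrite /c' liftK => m.
    have := mxB loc m (mxMr (a (lift i1 j)) me); by rewrite addrK.
  move=> i; case: (split_ordP i) => j -> //; by rewrite (ord1 j).
have zind : indep_mod (@msq R) z.
  move=> c Hc.
  have sz : soc (\sum_(j < r') c j * z j).
    by apply: (@id_sum (@soc R) _ _ (@soc_ideal R)) => j; apply: (@idM (@soc R) _ _ (@soc_ideal R)); apply: zs.
  have [b Eb] := socmsq _ sz Hc.
  have E0 : \sum_(i < r' + 1) catf c (fun _ : 'I_1 => - b) i * zh i = 0.
    by rewrite /zh sum_catf2 big_ord1 Eb mulNr subrr.
  move=> j; have := @zind0 _ E0 (lshift 1 j); by rewrite catf_l.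
have socZ : forall s, soc s -> exists aa : 'I_r' -> R, exists c0,
    s = \sum_(j < r') aa j * z j + c0 * h0.
  move=> s ss.
  have [aa Eaa] : exists aa : 'I_(r' + 1) -> R, s - \sum_(i < r' + 1) aa i * zh i = 0.
    apply: (@dep_ext (fun x => x = 0) _ zh s) => //; [exact: zero_ideal | by move=> e me; rewrite mulrC ss |].
    apply: (kdim_not_indep sd); last by rewrite !addn1.
    by move=> i; rewrite /catf; case: split => // j; apply: zhs.
  exists (fun j => aa (lshift 1 j)), (aa (rshift r' ord0)).
  apply/eqP; rewrite -subr_eq0; apply/eqP; rewrite -[RHS]Eaa; congr (_ - _).
  by rewrite /zh sum_catf big_ord1.
pose Zm := cmat z.
have frZ : row_free Zm := indep_free zm zind.
pose Cm := row_base (Zm^C)%MS.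
pose m' := \rank (Zm^C)%MS.
pose x' := fun j : 'I_m' => Lrow (row j Cm).
have x'm : forall j, mx (x' j) by move=> j; apply: Lrow_mx.
have cmx' : cmat x' = Cm by apply/matrixP => i j; rewrite mxE /x' (coord_L (row i Cm)) mxE.
have frC : row_free Cm := row_base_free _.
have x'ind : indep_mod (@msq R) x' by apply: free_indep => //; rewrite cmx'.
have rZ : \rank Zm = r' by apply/eqP.
have m'E : m' = (n - r')%N by rewrite /m' mxrank_compl rZ.
have r'n : (r' <= n)%N by rewrite -rZ rank_leq_col.
have coordZ : forall aa : 'I_r' -> R, coord (\sum_(j < r') aa j * z j) = (\row_i pk loc (aa i)) *m Zm.
  by move=> aa; apply: coord_comb.
have coordX : forall d : 'I_m' -> R, coord (\sum_(j < m') d j * x' j) = (\row_i pk loc (d i)) *m Cm.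
  by move=> d; rewrite coord_comb // cmx'.
pose Zi := fun y : R => exists aa : 'I_r' -> R, y = \sum_(j < r') aa j * z j.
pose Wi := fun y : R => exists d : 'I_m' -> R, msq (y - \sum_(j < m') d j * x' j).
have Zid : is_ideal Zi := span_ideal xpredT z.
have Zim : forall y, Zi y -> mx y by move=> y [aa ->]; apply: mx_sum => // j; apply: mxM.
have Wid : is_ideal Wi.
  split.
  - exists (fun _ => 0); rewrite big1 ?subr0; [exact: msq0 | by move=> j _; rewrite mul0r].
  - move=> y1 y2 [d1 h1] [d2 h2]; exists (fun j => d1 j + d2 j).
    have -> : y1 + y2 - \sum_(j < m') (d1 j + d2 j) * x' j =
      (y1 - \sum_(j < m') d1 j * x' j) + (y2 - \sum_(j < m') d2 j * x' j).
      rewrite (eq_bigr (fun j => d1 j * x' j + d2 j * x' j)); last by move=> j _; rewrite mulrDl.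
      rewrite big_split /=; ring.
    exact: msqD.
  - move=> b y [d h]; exists (fun j => b * d j).
    have -> : b * y - \sum_(j < m') (b * d j) * x' j = b * (y - \sum_(j < m') d j * x' j).
      by rewrite mulrBr mulr_sumr; congr (_ - _); apply: eq_bigr => j _; rewrite mulrA.
    exact: msqM.
have Wim : forall y, Wi y -> mx y.
  move=> y [d h]; have -> : y = (y - \sum_(j < m') d j * x' j) + \sum_(j < m') d j * x' j by rewrite subrK.
  apply: loc; first exact: msq_mx.
  by apply: mx_sum => // j; apply: mxM.
pose Zp := mkpideal Zid Zim.
pose Wp := mkpideal Wid Wim.
have capZ : forall (aa : 'I_r' -> R) (d : 'I_m' -> R),
    (\row_i pk loc (aa i)) *m Zm = (\row_i pk loc (d i)) *m Cm ->
    (forall i, mx (aa i)) /\ (forall j, mx (d j)).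
  move=> aa d E; have [h1 h2] := cap_compl frZ E.
  by split; apply: rowpk_eq0.
have Zsoc0 : forall aa : 'I_r' -> R, (forall i, mx (aa i)) -> \sum_(j < r') aa j * z j = 0.
  by move=> aa ha; apply: big1 => j _; rewrite mulrC zs.
have ZW0 : forall y, pI Zp y -> pI Wp y -> y = 0.
  move=> y [aa ey] [d hd].
  have my : mx y := Zim _ (ex_intro _ aa ey).
  have := coord_msq hd; rewrite coordB //; last by apply: mx_sum => // j; apply: mxM.
  rewrite ey coordZ coordX => /eqP; rewrite subr_eq0 => /eqP /capZ [ha _].
  by apply: Zsoc0.
have ZWm : forall y, mx y -> exists a b, [/\ pI Zp a, pI Wp b & y = a + b].
  move=> y my.
  have : (coord y <= Zm + Zm^C)%MS by apply: submx_full; apply: addsmx_compl_full.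
  case/sub_addsmxP => [[u1 u2] /= Ey].
  have : (Zm^C <= Cm)%MS by rewrite eq_row_base.
  case/submxP => D ED.
  pose aa := fun i => repr (u1 0 i); pose d := fun j => repr ((u2 *m D) 0 j).
  have mZ : mx (\sum_(j < r') aa j * z j) by apply: mx_sum => // j; apply: mxM.
  have mX : mx (\sum_(j < m') d j * x' j) by apply: mx_sum => // j; apply: mxM.
  exists (\sum_(j < r') aa j * z j), (y - \sum_(j < r') aa j * z j).
  split; [by exists aa | | by rewrite addrC subrK].
  exists d; apply: coord0; first by apply: mxB => //; apply: mxB.
  rewrite !coordB //; last exact: mxB.
  rewrite coordZ coordX /aa /d !row_repr Ey -mulmxA -ED.
  by rewrite [u1 *m Zm + _]addrC addrK subrr.
have ZiP : forall y, pI Zp y <-> Zi y by [].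
have pqmZ := @pq_mx R loc Zp Zim.
have pqmW := @pq_mx R loc Wp Wim.
have msqZ := @msq_quot R loc Zp Zim.
have msqW := @msq_quot R loc Wp Wim.
have zh0 : ~ Zi h0.
  move=> [aa eh].
  have E0 : \sum_(i < r' + 1) catf aa (fun _ : 'I_1 => -1) i * zh i = 0.
    by rewrite /zh sum_catf2 big_ord1 -eh mulN1r subrr.
  have := @zind0 _ E0 (rshift r' ord0); rewrite catf_r => /mxN; rewrite opprK.
  exact: mx1.
have msqZ0 : forall y, Zi y -> msq y -> y = 0.
  by move=> y [aa ->] hm; apply: Zsoc0; apply: zind.
have [_ edB] := ed.
have pqsum : forall (J : pideal R) t (c : 'I_t -> Qt J) (u : 'I_t -> R),
    \sum_(i < t) c i * pq J (u i) = pq J (\sum_(i < t) repr (c i) * u i).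
  by move=> J t c u; rewrite rmorph_sum; apply: eq_bigr => i _; rewrite rmorphM pq_repr.
exists (Qt Zp), (Qt Wp), (Kt loc), (pq Zp), (pq Wp), (@qlift R loc Zp Zim), (@qlift R loc Wp Wim).
split; first exact: (@fibre_gen R loc Zp Wp Zim Wim ZW0 ZWm).
split.
  split.
  - exact: artinian_quot.
  - exact: (@loc_quot R loc Zp Zim).
  - by apply: (@stretched_quot R loc Zp Zim); exists g.
  - apply: (@gor_quot R loc Zp Zim h0) => //.
    move=> s ss; have [aa [c0 E]] := socZ s ss.
    by exists (\sum_(j < r') aa j * z j), c0; split => //; exists aa.
  - rewrite addn1 subSS -m'E; split.
      exists (fun j => pq Zp (x' j)); split.
        by move=> j; apply/pqmZ.
      move=> c Hc j; rewrite pqsum in Hc.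
      move/msqZ: Hc => [y [my /pq_eq [aa eaa]]].
      have mS : mx (\sum_(i < m') repr (c i) * x' i) by apply: mx_sum => // i; apply: mxM.
      have := coordB (msq_mx loc my) mS; rewrite eaa coordZ (coord_msq my) coordX sub0r.
      have -> : - ((\row_i pk loc (repr (c i))) *m Cm) = (\row_i pk loc (- repr (c i))) *m Cm.
        by rewrite -mulNmx; congr (_ *m _); apply/rowP => i; rewrite !mxE rmorphN.
      move/capZ => [_ h]; have := mxN (h j); rewrite opprK => hj.
      by rewrite -(pq_repr (c j)); apply/pqmZ.
    move=> t u um uind.
    pose u' := fun i => repr (u i).
    have u'm : forall i, mx (u' i).
      by move=> i; apply/pqmZ; rewrite /u' pq_repr.
    have ind : indep_mod (@msq R) (catf u' z).
      move=> c Hc; rewrite sum_catf in Hc.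
      have Hq : msq (\sum_(i < t) pq Zp (c (lshift r' i)) * u i).
        apply/msqZ; exists (\sum_(i < t) c (lshift r' i) * u' i + \sum_(i < r') c (rshift t i) * z i).
        split => //; rewrite rmorphD.
        have /pq_eq0 -> : pI Zp (\sum_(i < r') c (rshift t i) * z i) by exists (fun i => c (rshift t i)).
        rewrite addr0 rmorph_sum; apply: eq_bigr => i _; by rewrite rmorphM /u' pq_repr.
      have mcl : forall i, mx (c (lshift r' i)).
        by move=> i; apply/pqmZ; apply: (@uind _ Hq i).
      have h1 : msq (\sum_(i < t) c (lshift r' i) * u' i) by apply: msq_sum => i; apply: msqMM.
      have h2 : msq (\sum_(i < r') c (rshift t i) * z i).
        by have := msqB Hc h1; rewrite addrAC subrr add0r.
      move=> i; case: (split_ordP i) => j -> //; exact: (@zind _ h2 j).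
    have := edB _ _ (fun i => _) ind.
    have cm : forall i, mx (catf u' z i) by move=> i; rewrite /catf; case: split.
    move=> /(_ cm); lia.
split; first lia.
split; last lia.
have msqT0 : forall y : Qt Wp, msq y -> y = 0.
  move=> y /msqW [w0 [mw <-]]; apply/pq_eq0; exists (fun _ => 0).
  by rewrite big1 ?subr0 // => j _; rewrite mul0r.
split.
- exact: (@loc_quot R loc Wp Wim).
- exact: msqT0.
- rewrite subSS subn0; split.
    exists (fun j => pq Wp (z j)); split; first by move=> j; apply/pqmW.
    move=> c Hc j; rewrite pqsum in Hc.
    move/msqT0/pq_eq0: Hc => HW.
    have := ZW0 _ (ex_intro _ (fun i => repr (c i)) erefl) HW => E0.
    have : msq (\sum_(i < r') repr (c i) * z i) by rewrite E0; apply: msq0.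
    move/zind => /(_ j) hj.
    by rewrite -(pq_repr (c j)); apply/pqmW.
  move=> t u um uind.
  pose u' := fun i => repr (u i).
  have u'm : forall i, mx (u' i).
    by move=> i; apply/pqmW; rewrite /u' pq_repr.
  have ind : indep_mod (@msq R) (catf u' x').
    move=> c Hc; rewrite sum_catf in Hc.
    have W1 : pI Wp (\sum_(i < t) c (lshift m' i) * u' i + \sum_(i < m') c (rshift t i) * x' i).
      exists (fun _ => 0) => /=.
      have -> : \sum_(j < m') 0 * x' j = 0 by apply: big1 => j _; rewrite mul0r.
      by rewrite subr0.
    have W2 : pI Wp (\sum_(i < m') c (rshift t i) * x' i).
      by exists (fun i => c (rshift t i)); rewrite subrr; apply: msq0.
    have Hq : msq (\sum_(i < t) pq Wp (c (lshift m' i)) * u i).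
      suff -> : \sum_(i < t) pq Wp (c (lshift m' i)) * u i = 0 by apply: msq0.
      move/pq_eq0: W1; rewrite rmorphD; have /pq_eq0 -> := W2; rewrite addr0 => E; rewrite -[RHS]E.
      rewrite rmorph_sum; apply: eq_bigr => i _; by rewrite rmorphM /u' pq_repr.
    have mcl : forall i, mx (c (lshift m' i)).
      by move=> i; apply/pqmW; apply: (@uind _ Hq i).
    have h1 : msq (\sum_(i < t) c (lshift m' i) * u' i) by apply: msq_sum => i; apply: msqMM.
    have h2 : msq (\sum_(i < m') c (rshift t i) * x' i).
      by have := msqB Hc h1; rewrite addrAC subrr add0r.
    move=> i; case: (split_ordP i) => j -> //; exact: (@x'ind _ h2 j).
  have cm : forall i, mx (catf u' x' i) by move=> i; rewrite /catf; case: split.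
  have := edB _ _ cm ind; lia.
Qed.
End Part1.
End Dep.

Unset Implicit Arguments.
Theorem mainTheorem8 (R : comUnitRingType) (n r : nat) :
  artinian R -> is_local R -> stretched R ->
  edim_eq R n -> socdim_eq R r ->
  (* main dichotomy *)
  (gorenstein R \/
   exists (S T : comUnitRingType) (k : fieldType)
          (p : {rmorphism R -> S}) (q : {rmorphism R -> T})
          (piS : {rmorphism S -> k}) (piT : {rmorphism T -> k}),
     fibre_iso p q piS piT /\
     [/\ artinian S, is_local S, stretched S, gorenstein S & edim_eq S (n + 1 - r)] /\
     (n + 1 = (n + 1 - r) + r)%N /\
     [/\ is_local T, (forall y : T, msq y -> y = 0) & edim_eq T (r - 1)] /\
     (r = (r - 1).+1)%N)
  /\
  (* soc(R) contained in m^2 forces Gorenstein *)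
  ((forall x : R, soc x -> msq x) -> gorenstein R)
  /\
  (* x_{i0} in soc \ m^2, part of a minimal generating set x_1..x_n of m *)
  (forall (x : 'I_n -> R) (i0 : 'I_n),
     (forall i, mx (x i)) ->
     (forall y : R, mx y -> exists c : 'I_n -> R, y = \sum_(i < n) c i * x i) ->
     soc (x i0) -> ~ msq (x i0) ->
     exists (S T : comUnitRingType) (k : fieldType)
            (p : {rmorphism R -> S}) (q : {rmorphism R -> T})
            (piS : {rmorphism S -> k}) (piT : {rmorphism T -> k}),
       fibre_iso p q piS piT /\
       (* S = R/(x_{i0}) *)
       (forall s : S, exists y, p y = s) /\
       (forall y, p y = 0 <-> exists c, y = c * x i0) /\
       (* T = R/(x_j : j <> i0) *)
       (forall t : T, exists y, q y = t) /\
       (forall y, q y = 0 <->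
          exists c : 'I_n -> R, y = \sum_(j < n | j != i0) c j * x j)).
Proof.
move=> art loc [g Hg] ed sd.
have [[v [vm vind]] _] := ed.
have P2 : (forall x : R, soc x -> msq x) -> gorenstein R := part2 loc art Hg.
split.
  case: (pselect (gorenstein R)) => G; first by left.
  right; move: sd; case: r => [|r'] sd.
    exfalso; have [h0 [h0n sh0 _]] := hex loc art Hg.
    have : (1 <= 0)%N.
      apply: (sd.2 1%N (fun _ => h0)) => // c; rewrite big_ord1 => E i; rewrite (ord1 i).
      case: (mx_or_unit (c ord0)) => // U; exfalso; move/eqP: h0n; apply.
      exact: (unit_mul0 U E).
    by [].
  exact: (part1_core loc ed vm vind art Hg sd G).
split; first exact: P2.
move=> x i0 xm xgen xs _.
exact: (part3 loc ed vm vind xm xgen xs).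
Qed.
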